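(* Let $\mathbf{AUS}_3$ be the set of density matrices $\sigma$ on $\mathbb{C}^2\otimes\mathbb{C}^2$ such that for every unitary $U$ on $\mathbb{C}^2\otimes\mathbb{C}^2$, every choice of unit vectors $\hat u_1,\hat u_2,\hat u_3\in\mathbb{R}^3$ and every choice of orthonormal vectors $\hat v_1,\hat v_2,\hat v_3\in\mathbb{R}^3$, $$\frac{1}{\sqrt3}\Big|\sum_{i=1}^3\mathrm{Tr}\big(U\sigma U^\dagger\,(\hat u_i\cdot\vec s)\otimes(\hat v_i\cdot\vec s)\big)\Big|\le 1.$$ Let $|\Upsilon\rangle_{ABC}\in\mathbb{C}^2\otimes\mathbb{C}^2\otimes\mathbb{C}^2$ be any pure three-qubit state, with reduced states $\sigma_{AB}=\mathrm{Tr}_C|\Upsilon\rangle\langle\Upsilon|$ and $\sigma_C=\mathrm{Tr}_{AB}|\Upsilon\rangle\langle\Upsilon|$. Then $\sigma_{AB}\in\mathbf{AUS}_3$ if and only if $\sigma_C=I/2$ is the maximally mixed state.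
   Context: $\vec{s}=(s_1,s_2,s_3)$ denotes the vector of Pauli matrices, and for $\hat w\in\mathbb{R}^3$, $\hat w\cdot\vec s=\sum_k w_k s_k$. *)

(* Defs.v *)
From HB Require Import structures.
From mathcomp Require Import all_boot all_order all_algebra.
From mathcomp Require Import complex mxtens.
From mathcomp Require Import reals.
Set Implicit Arguments. Unset Strict Implicit. Unset Printing Implicit Defensive.
Import Order.TTheory GRing.Theory Num.Theory.
Local Open Scope ring_scope.
Local Open Scope complex_scope.

Section Qubits.
Variable R : realType.
Local Notation C := R[i].

Definition adj {m n} (A : 'M[C]_(m, n)) : 'M[C]_(n, m) := (map_mx conjc A)^T.

Definition hermitian {n} (A : 'M[C]_n) := adj A = A.
Definition unitary {n} (U : 'M[C]_n) := U *m adj U = 1%:M.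
(* positive semidefinite: <v, A v> >= 0 for all v (order of C: real and >= 0) *)
Definition psd {n} (A : 'M[C]_n) := forall v : 'cV[C]_n, 0 <= (adj v *m A *m v) 0 0.
Definition density {n} (rho : 'M[C]_n) := [/\ hermitian rho, psd rho & \tr rho = 1].

(* Pauli matrices s_1, s_2, s_3 (indexed by 'I_3 = {0,1,2}) *)
Definition pauli (k : 'I_3) : 'M[C]_2 :=
  \matrix_(i < 2, j < 2)
    (if val k == 0%N then (if val i == val j then 0 else 1)
     else if val k == 1%N then
       (if val i == val j then 0 else if val i == 0%N then - 'i else 'i)
     else (if val i == val j then (if val i == 0%N then 1 else -1) else 0)).

Definition wdots (w : 'rV[R]_3) : 'M[C]_2 := \sum_(k < 3) (w 0 k)%:C *: pauli k.

Definition unit_vec (w : 'rV[R]_3) := \sum_(k < 3) w 0 k ^+ 2 = 1.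
Definition orthonormal3 (v : 'I_3 -> 'rV[R]_3) :=
  forall i j : 'I_3, \sum_(k < 3) v i 0 k * v j 0 k = (i == j)%:R.

Definition AUS3 (sigma : 'M[C]_(2 * 2)) :=
  density sigma /\
  forall (U : 'M[C]_(2 * 2)) (u v : 'I_3 -> 'rV[R]_3),
    unitary U -> (forall i, unit_vec (u i)) -> orthonormal3 v ->
    (Num.sqrt (3 : R))^-1%:C *
      `| \sum_(i < 3) \tr (U *m sigma *m adj U *m (wdots (u i) *t wdots (v i))) | <= 1.

Definition ptrC (rho : 'M[C]_(2 * 2 * 2)) : 'M[C]_(2 * 2) :=
  \matrix_(i, j) \sum_(k < 2) rho (mxtens_index (i, k)) (mxtens_index (j, k)).
Definition ptrAB (rho : 'M[C]_(2 * 2 * 2)) : 'M[C]_2 :=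
  \matrix_(i, j) \sum_(k < 2 * 2) rho (mxtens_index (k, i)) (mxtens_index (k, j)).

End Qubits.

(* Main.v *)
Require Import Defs.
From HB Require Import structures.
From mathcomp Require Import all_boot all_order all_algebra.
From mathcomp Require Import fingroup perm complex mxtens spectral.
From mathcomp Require sesquilinear.
From mathcomp Require Import reals ring lra.
Import Order.TTheory GRing.Theory Num.Theory.
Local Open Scope ring_scope.
Local Open Scope complex_scope.
Set Implicit Arguments. Unset Strict Implicit. Unset Printing Implicit Defensive.
Section S.
Variable R : realType.
Local Notation C := R[i].

Ltac cbrute := apply/eqP; rewrite eq_complex /=; apply/andP; split; apply/eqP; ring.

Definition o0 : 'I_3 := @Ordinal 3 0 isT.
Definition o1 : 'I_3 := @Ordinal 3 1 isT.
Definition o2 : 'I_3 := @Ordinal 3 2 isT.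
Definition q0 : 'I_2 := @Ordinal 2 0 isT.
Definition q1 : 'I_2 := @Ordinal 2 1 isT.

Lemma sum3 (V : nmodType) (F : 'I_3 -> V) : \sum_(k < 3) F k = F o0 + F o1 + F o2.
Proof. by rewrite !big_ord_recr big_ord0 /= add0r; congr (F _ + F _ + F _); apply/val_inj. Qed.
Lemma sum2 (V : nmodType) (F : 'I_2 -> V) : \sum_(k < 2) F k = F q0 + F q1.
Proof. by rewrite !big_ord_recr big_ord0 /= add0r; congr (F _ + F _); apply/val_inj. Qed.
Lemma sum4 (V : nmodType) (F : 'I_(2*2) -> V) :
  \sum_(k < 2*2) F k = \sum_(i < 2) \sum_(j < 2) F (mxtens_index (i, j)).
Proof.
rewrite pair_big /=. rewrite (reindex (@mxtens_index 2 2)) /=; last first.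
  by exists (@mxtens_unindex 2 2) => x _; rewrite (mxtens_indexK, mxtens_unindexK).
by apply: eq_bigr => -[i j].
Qed.

Section Wd.
Variable a : 'rV[R]_3.
Let a0 := (a 0 o0)%:C. Let a1 := (a 0 o1)%:C. Let a2 := (a 0 o2)%:C.
Lemma wd00 : wdots a q0 q0 = a2.
Proof. by rewrite /wdots summxE sum3 !mxE /=; cbrute. Qed.
Lemma wd01 : wdots a q0 q1 = a0 - 'i * a1.
Proof. by rewrite /wdots summxE sum3 !mxE /=; cbrute. Qed.
Lemma wd10 : wdots a q1 q0 = a0 + 'i * a1.
Proof. by rewrite /wdots summxE sum3 !mxE /=; cbrute. Qed.
Lemma wd11 : wdots a q1 q1 = - a2.
Proof. by rewrite /wdots summxE sum3 !mxE /=; cbrute. Qed.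
End Wd.

Lemma tr_wdots (a : 'rV[R]_3) : \tr (wdots a) = 0.
Proof. by rewrite /mxtrace sum2 wd00 wd11 addrN. Qed.

Lemma tr_wdotsM (a b : 'rV[R]_3) : \tr (wdots a *m wdots b) = (2 * \sum_k a 0 k * b 0 k)%:C.
Proof. rewrite /mxtrace sum2 !mxE !sum2 !wd00 !wd01 !wd10 !wd11 sum3. cbrute. Qed.


Lemma ord2P (i : 'I_2) : i = q0 \/ i = q1.
Proof. by case: i => [[|[|]] Hi] //; [left|right]; apply/val_inj. Qed.

Lemma conjcE (x : C) : x^* = Num.conj x.
Proof. by case: x. Qed.

Lemma adjE m n (A : 'M[C]_(m, n)) i j : adj A i j = (A j i)^*.
Proof. by rewrite /adj !mxE. Qed.

Lemma adj_mul m n p (A : 'M[C]_(m, n)) (B : 'M[C]_(n, p)) : adj (A *m B) = adj B *m adj A.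
Proof. by rewrite /adj map_mxM trmx_mul. Qed.

Lemma adjK m n (A : 'M[C]_(m, n)) : adj (adj A) = A.
Proof. by apply/matrixP => i j; rewrite !adjE conjcK. Qed.

Lemma adjD m n (A B : 'M[C]_(m, n)) : adj (A + B) = adj A + adj B.
Proof. by apply/matrixP => i j; rewrite [RHS]mxE !adjE mxE rmorphD. Qed.

Lemma adjZ m n c (A : 'M[C]_(m, n)) : adj (c *: A) = conjc c *: adj A.
Proof. by apply/matrixP => i j; rewrite [RHS]mxE !adjE mxE rmorphM. Qed.

Lemma adj_sum m n (I : finType) (F : I -> 'M[C]_(m, n)) : adj (\sum_i F i) = \sum_i adj (F i).
Proof. by apply/matrixP => i j; rewrite adjE !summxE rmorph_sum; apply: eq_bigr => k _; rewrite adjE. Qed.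

Lemma adj1 n : adj (1%:M : 'M[C]_n) = 1%:M.
Proof. by rewrite /adj map_mx1 trmx1. Qed.

Lemma adj_tens m n p q (A : 'M[C]_(m, n)) (B : 'M[C]_(p, q)) : adj (A *t B) = adj A *t adj B.
Proof. by rewrite /adj map_mxT trmx_tens. Qed.

Lemma tr_tens m n (A : 'M[C]_m) (B : 'M[C]_n) : \tr (A *t B) = \tr A * \tr B.
Proof. by rewrite /mxtrace mulr_sum; apply: eq_bigr => i _; rewrite !mxE. Qed.

Lemma herm_wdots (a : 'rV[R]_3) : Defs.hermitian (wdots a).
Proof.
rewrite /Defs.hermitian; apply/matrixP => i j; rewrite adjE.
by case: (ord2P i) => ->; case: (ord2P j) => ->; rewrite ?wd00 ?wd01 ?wd10 ?wd11; cbrute.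
Qed.

Lemma tr_herm_ge0 n (N : 'M[C]_n) : Defs.hermitian N -> 0 <= \tr (N *m N).
Proof.
move=> hN; rewrite /mxtrace; apply: sumr_ge0 => i _; rewrite mxE.
apply: sumr_ge0 => k _. rewrite -{2}hN adjE. exact: mulcJ_ge0.
Qed.


Lemma tr_expand n (A B : 'M[C]_n) (x y z : C) :
 \tr ((x *: A + y *: 1%:M + z *: B) *m (x *: A + y *: 1%:M + z *: B)) =
 x*x * \tr (A *m A) + 2 * x * y * \tr A + 2 * x * z * \tr (A *m B)
 + y*y * n%:R + 2*y*z * \tr B + z*z * \tr (B *m B).
Proof.
rewrite !mulmxDl !mulmxDr -!scalemxAl -!scalemxAr !mul1mx !mulmx1 !scalerA.
rewrite !mxtraceD !mxtraceZ mxtrace1 (mxtrace_mulC B A); ring.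
Qed.

Lemma conjR (a : R) : conjc (a%:C) = a%:C.
Proof. by rewrite /conjc /= oppr0. Qed.

Lemma inv2C : (2^-1 : C) = (2^-1 : R)%:C.
Proof. by rewrite fmorphV /= rmorph_nat. Qed.

Lemma normC_real (a : R) : `|a%:C| = `|a|%:C.
Proof. by rewrite normc_def /= expr0n /= addr0 sqrtr_sqr. Qed.

Lemma cs_bound (rho M : 'M[C]_(2*2)) : Defs.hermitian rho -> Defs.hermitian M ->
  \tr rho = 1 -> \tr (rho *m rho) = 2^-1 -> \tr M = 0 -> \tr (M *m M) = 12%:R ->
  (Num.sqrt (3:R))^-1%:C * `|\tr (rho *m M)| <= 1.
Proof.
move=> hr hM tr1 tr2 trM trMM.
set s := Num.sqrt (3:R).
have s0 : 0 < s by rewrite sqrtr_gt0 ltr0n.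
have s2 : s * s = 3 by rewrite -expr2 sqr_sqrtr // ler0n.
have key : forall e : R, e * e = 1 -> 0 <= 24%:R + (8 * s * e)%:C * \tr (rho *m M).
  move=> e ee.
  pose N := (4 * s)%:C *: rho + (- s)%:C *: 1%:M + e%:C *: M.
  have hN : Defs.hermitian N.
    by rewrite /Defs.hermitian /N !adjD !adjZ adj1 hr hM !conjR.
  have := tr_herm_ge0 hN; rewrite /N tr_expand tr1 tr2 trM trMM.
  suff -> : (4 * s)%:C * (4 * s)%:C * 2^-1 + 2 * (4 * s)%:C * (- s)%:C * 1 +
    2 * (4 * s)%:C * e%:C * \tr (rho *m M) + (- s)%:C * (- s)%:C * (2 * 2)%:R +
    2 * (- s)%:C * e%:C * 0 + e%:C * e%:C * 12%:R = 24%:R + (8 * s * e)%:C * \tr (rho *m M) by [].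
  rewrite inv2C; move: (\tr (rho *m M)) => [a b].
  apply/eqP; rewrite eq_complex /=; apply/andP; split; apply/eqP. nra. nra.
have k1 := key 1 (mulr1 1). have k2 := key (-1) ltac:(by rewrite mulrNN mulr1).
move: k1 k2; rewrite mulr1; move: (\tr (rho *m M)) => [a b].
rewrite !lecE => /andP[/eqP hb1 ha1] /andP[_ ha2].
rewrite /= in hb1 ha1 ha2.
have b0 : b = 0 by nra.
subst b; rewrite complexr0 normC_real -rmorphM /= eqxx /=.
have hs : `|a| <= s.
  rewrite ler_norml; apply/andP; split; nra.
by rewrite ler_pdivrMl // mulr1.
Qed.


Lemma M_props (u v : 'I_3 -> 'rV[R]_3) : (forall i, unit_vec (u i)) -> orthonormal3 v ->
  Defs.hermitian (\sum_i (wdots (u i) *t wdots (v i))) /\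
  \tr (\sum_i (wdots (u i) *t wdots (v i))) = 0 /\
  \tr ((\sum_i (wdots (u i) *t wdots (v i))) *m (\sum_i (wdots (u i) *t wdots (v i)))) = 12%:R.
Proof.
move=> hu hv; split; [|split].
- by rewrite /Defs.hermitian adj_sum; apply: eq_bigr => i _; rewrite adj_tens !herm_wdots.
- by rewrite raddf_sum /= big1 // => i _; rewrite tr_tens tr_wdots mul0r.
rewrite mulmx_suml raddf_sum /=.
have H : forall i, \tr (wdots (u i) *t wdots (v i) *m \sum_j (wdots (u j) *t wdots (v j)))
   = \sum_j (2 * \sum_k u i 0 k * u j 0 k)%:C * (2 * (i == j)%:R)%:C.
  move=> i; rewrite mulmx_sumr raddf_sum /=; apply: eq_bigr => j _.
  by rewrite tensmx_mul tr_tens !tr_wdotsM hv.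
rewrite (eq_bigr _ (fun i _ => H i)).
have hu' : forall i, \sum_k u i 0 k * u i 0 k = 1.
  by move=> i; rewrite -(hu i); apply: eq_bigr => k _; rewrite expr2.
have hu3 : forall i, u i 0 o0 * u i 0 o0 + u i 0 o1 * u i 0 o1 + u i 0 o2 * u i 0 o2 = 1.
  by move=> i; rewrite -(hu' i) sum3.
rewrite !sum3 /= !hu3; cbrute.
Qed.


Definition Wm (Y : 'cV[C]_(2 * 2 * 2)) : 'M[C]_(2 * 2, 2) :=
  \matrix_(i, k) Y (mxtens_index (i, k)) 0.

Lemma ptrC_W Y : ptrC (Y *m adj Y) = Wm Y *m adj (Wm Y).
Proof.
apply/matrixP => i j; rewrite !mxE; apply: eq_bigr => k _.
by rewrite !mxE big_ord1 !adjE ?mxE.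
Qed.

Lemma ptrAB_W Y : ptrAB (Y *m adj Y) = (adj (Wm Y) *m Wm Y)^T.
Proof.
apply/matrixP => i j; rewrite !mxE; apply: eq_bigr => k _.
by rewrite !mxE big_ord1 !adjE ?mxE mulrC.
Qed.

Lemma unitaryC n (U : 'M[C]_n) : unitary U -> adj U *m U = 1%:M.
Proof. by move=> hU; apply: mulmx1C. Qed.

Lemma density_WW m (W : 'M[C]_(m, 2)) : \tr (adj W *m W) = 1 -> density (W *m adj W).
Proof.
move=> htr; split.
- by rewrite /Defs.hermitian adj_mul adjK.
- move=> v.
  have -> : adj v *m (W *m adj W) *m v = adj (adj W *m v) *m (adj W *m v).
    by rewrite adj_mul adjK !mulmxA.
  rewrite mxE.
  apply: sumr_ge0 => k _; rewrite adjE mulrC; exact: mulcJ_ge0.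
- by rewrite mxtrace_mulC.
Qed.

Lemma dir1 (Y : 'cV[C]_(2 * 2 * 2)) :
  ptrAB (Y *m adj Y) = 2^-1 *: 1%:M -> AUS3 (ptrC (Y *m adj Y)).
Proof.
rewrite ptrAB_W ptrC_W => hG.
set W := Wm Y in hG *.
have hG' : adj W *m W = 2^-1 *: 1%:M.
  by rewrite -[adj W *m W]trmxK hG linearZ /= trmx1.
have trG : \tr (adj W *m W) = 1.
  by rewrite hG' mxtraceZ mxtrace1 mulVf // pnatr_eq0.
split; first exact: density_WW.
move=> U u v hU hu hv.
have [hM [trM trMM]] := M_props hu hv.
set M := \sum_i _ in hM trM trMM.
have -> : \sum_(i < 3) \tr (U *m (W *m adj W) *m adj U *m (wdots (u i) *t wdots (v i)))
   = \tr (U *m (W *m adj W) *m adj U *m M).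
  by rewrite /M mulmx_sumr raddf_sum.
have hUU := unitaryC hU.
apply: cs_bound => //.
- by rewrite /Defs.hermitian !adj_mul !adjK -!mulmxA.
- by rewrite mxtrace_mulC !mulmxA hUU mul1mx mxtrace_mulC.
- rewrite !mulmxA -(mulmxA (U *m W *m adj W) (adj U) U) hUU mulmx1.
  rewrite mxtrace_mulC !mulmxA hUU mul1mx.
  rewrite mxtrace_mulC !mulmxA -(mulmxA (adj W *m W) (adj W) W) hG'.
  rewrite -scalemxAl mul1mx mxtraceZ mxtraceZ mxtrace1 mulVf ?mulr1 // pnatr_eq0 //.
Qed.


Lemma tC_adj m n (A : 'M[C]_(m, n)) : map_mx Num.conj (A^T) = adj A.
Proof. by apply/matrixP => i j; rewrite adjE !mxE conjcE. Qed.

Lemma spec_decomp (S : 'M[C]_(2*2)) : Defs.hermitian S ->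
  exists (P : 'M[C]_(2*2)) (d : 'rV[C]_(2*2)),
    P *m adj P = 1%:M /\ P *m S *m adj P = diag_mx d.
Proof.
move=> hS.
have hn : S \is normalmx by apply/normalmxP; rewrite !tC_adj hS.
have hP := spectral_unitarymx S.
have hPP : spectralmx S *m adj (spectralmx S) = 1%:M.
  by move/unitarymxP: hP; rewrite tC_adj.
exists (spectralmx S), (spectral_diag S); split => //.
move/orthomx_spectralP: hn => hS'.
rewrite {2}hS' (invmx_unitary hP) tC_adj !mulmxA hPP mul1mx -mulmxA hPP mulmx1 //.
Qed.


Definition bellv (p : 'I_2 * 'I_2) (k : nat) : R :=
  let a := val p.1 in let b := val p.2 in
  match k with
  | 0 => if a == b then 1 else 0
  | 1 => if a == b then (if a == 0%N then 1 else -1) else 0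
  | 2 => if a == b then 0 else 1
  | _ => if a == b then 0 else (if a == 0%N then 1 else -1)
  end.
Definition B0 : 'M[C]_(2*2) := \matrix_(r, k) (bellv (mxtens_unindex r) (val k))%:C.

Lemma B0E a b k : B0 (mxtens_index (a, b)) k = (bellv (a, b) (val k))%:C.
Proof. by rewrite mxE mxtens_indexK. Qed.

Definition Sg (k : nat) (j : 'I_3) : R :=
  match k, val j with
  | 0, 1 => -1 | 0, _ => 1
  | 1, 0 => -1 | 1, _ => 1
  | 2, 2 => -1 | 2, _ => 1
  | _, _ => -1 end.

Lemma ord4P (k : 'I_(2*2)) : [\/ val k = 0, val k = 1, val k = 2 | val k = 3]%N.
Proof. by case: k => [[|[|[|[|]]]] Hk] //=; constructor. Qed.

Lemma bell_diag (a b : 'rV[R]_3) (k : 'I_(2*2)) :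
  (adj B0 *m (wdots a *t wdots b) *m B0) k k = (2 * \sum_j Sg k j * (a 0 j * b 0 j))%:C.
Proof.
rewrite !mxE !sum4 !sum2 !mxE !sum4 !sum2 !adjE !B0E !tensmxE !wd00 !wd01 !wd10 !wd11 sum3.
case: k => [[|[|[|[|]]]] Hk] //=; rewrite /conjc /=; cbrute.
Qed.


Lemma B0_unit : B0 *m adj B0 = 2%:R *: 1%:M.
Proof.
apply/matrixP => r c.
case: (mxtens_indexP r) => a b; case: (mxtens_indexP c) => a' b'.
rewrite !mxE sum4 !sum2 !adjE !B0E.
by case: (ord2P a) => ->; case: (ord2P b) => ->; case: (ord2P a') => ->; case: (ord2P b') => ->;
  rewrite /= /conjc /=; cbrute.
Qed.


Lemma ord3P (i : 'I_3) : [\/ i = o0, i = o1 | i = o2].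
Proof. by case: i => [[|[|[|]]] Hi] //; [constructor 1|constructor 2|constructor 3]; apply/val_inj. Qed.

Lemma rank_pairs (Z : 'M[C]_(2*2, 2)) (d : 'rV[C]_(2*2)) : diag_mx d = Z *m adj Z ->
  forall i1 i2 i3 : 'I_(2*2), i1 != i2 -> i1 != i3 -> i2 != i3 ->
  d 0 i1 != 0 -> d 0 i2 != 0 -> d 0 i3 != 0 -> False.
Proof.
move=> hD i1 i2 i3 n12 n13 n23 h1 h2 h3.
pose f (r : 'I_3) : 'I_(2*2) := if val r == 0%N then i1 else if val r == 1%N then i2 else i3.
have finj : injective f.
  move=> r r'; rewrite /f; case: (ord3P r) => ->; case: (ord3P r') => -> //= e;
  by move: n12 n13 n23; rewrite e ?eqxx //= eq_sym ?eqxx.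
have hsub : mxsub f f (diag_mx d) = diag_mx (\row_r d 0 (f r)).
  by apply/matrixP => r r'; rewrite !mxE (inj_eq finj).
have r3 : \rank (diag_mx (\row_r d 0 (f r))) = 3%N.
  apply: mxrank_unit; rewrite unitmxE det_diag unitfE.
  rewrite !big_ord_recr big_ord0 /= !mxE mul1r /f /=.
  by rewrite !mulf_neq0.
have le1 : (\rank (mxsub f f (diag_mx d)) <= \rank (diag_mx d))%N.
  rewrite mxsubrc; apply: leq_trans (mxrankS (rowsub_sub _ _)) _.
  have -> : colsub f (diag_mx d) = diag_mx d *m colsub f 1%:M by rewrite mulmx_colsub mulmx1.
  exact: mxrankM_maxl.
have le2 : (\rank (diag_mx d) <= 2)%N.
  by rewrite hD; apply: leq_trans (mxrankM_maxl _ _) (rank_leq_col _).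
by move: (leq_trans le1 le2); rewrite hsub r3.
Qed.

Definition a3 : R := Num.sqrt (3^-1).
Definition b2 : R := Num.sqrt (2^-1).
Definition c6 : R := Num.sqrt (6^-1).
Lemma sqrt_sq (x : R) : 0 <= x -> Num.sqrt x * Num.sqrt x = x.
Proof. by move=> hx; rewrite -expr2 sqr_sqrtr. Qed.
Lemma a3a3 : a3 * a3 = 3^-1. Proof. by rewrite sqrt_sq // invr_ge0 ler0n. Qed.
Lemma b2b2 : b2 * b2 = 2^-1. Proof. by rewrite sqrt_sq // invr_ge0 ler0n. Qed.
Lemma c6c6 : c6 * c6 = 6^-1. Proof. by rewrite sqrt_sq // invr_ge0 ler0n. Qed.

Definition Oe (i k : 'I_3) : R :=
  match val i, val k with
  | _, 0 => a3
  | 0, 1 => b2 | 1, 1 => - b2 | _, 1 => 0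
  | 0, _ => c6 | 1, _ => c6 | _, _ => - (2 * c6) end.


Lemma Oe_orth (i j : 'I_3) : \sum_k Oe i k * Oe j k = (i == j)%:R.
Proof.
have h3 := a3a3; have h2 := b2b2; have h6 := c6c6.
rewrite sum3; case: (ord3P i) => ->; case: (ord3P j) => -> /=; rewrite /Oe /=; nra.
Qed.

Lemma vec_construct (t : 'I_3 -> R) (p : {perm 'I_3}) :
  t (p o1) ^+ 2 = t (p o2) ^+ 2 -> 0 < \sum_j t j ^+ 2 ->
  exists u v : 'I_3 -> 'rV[R]_3, (forall i, unit_vec (u i)) /\ orthonormal3 v /\
    \sum_i \sum_j t j * (u i 0 j * v i 0 j) = (\sum_j t j ^+ 2) / Num.sqrt ((\sum_j t j ^+ 2) / 3).
Proof.
move=> ht hs; set s := \sum_j t j ^+ 2 in hs *.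
set r := Num.sqrt (s / 3).
have r0 : 0 < r by rewrite sqrtr_gt0 divr_gt0 // ltr0n.
have rr : r * r = s / 3 by rewrite sqrt_sq // divr_ge0 ?ltW // ler0n.
pose v (i : 'I_3) : 'rV[R]_3 := \row_k Oe i ((p^-1)%g k).
pose u (i : 'I_3) : 'rV[R]_3 := \row_k (r^-1 * (t k * v i 0 k)).
have key : forall i, \sum_k t k ^+ 2 * v i 0 k ^+ 2 = s / 3.
  move=> i; rewrite /s (reindex_inj (@perm_inj _ p)) [in RHS](reindex_inj (@perm_inj _ p)) /=.
  rewrite !sum3 /v !mxE !permK.
  have h3 := a3a3; have h2 := b2b2; have h6 := c6c6.
  case: (ord3P i) => -> /=; rewrite /Oe /=; nra.
exists u, v; split; [|split].
- move=> i; rewrite /unit_vec.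
  transitivity (r^-1 * r^-1 * \sum_k t k ^+ 2 * v i 0 k ^+ 2).
    rewrite mulr_sumr; apply: eq_bigr => k _; rewrite /u mxE; ring.
  rewrite (key i) -rr; field; exact: lt0r_neq0.
- move=> i j; rewrite /v; under eq_bigr => k _ do rewrite !mxE.
  by rewrite (reindex_inj (@perm_inj _ p)) /=; under eq_bigr => k _ do rewrite !permK; rewrite Oe_orth.
transitivity (\sum_(i < 3) r^-1 * (s / 3)).
  apply: eq_bigr => i _; rewrite -(key i) mulr_sumr; apply: eq_bigr => k _; rewrite /u mxE; ring.
rewrite sum3 -/r; field; exact: lt0r_neq0.
Qed.

Lemma tr_diag n (d : 'rV[C]_n) (A : 'M[C]_n) : \tr (diag_mx d *m A) = \sum_k d 0 k * A k k.
Proof. by rewrite mul_diag_mx /mxtrace; apply: eq_bigr => k _; rewrite mxE. Qed.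

Lemma tr_bell (d : 'rV[C]_(2*2)) (a b : 'rV[R]_3) :
  \tr ((2^-1 : R)%:C *: (B0 *m diag_mx d *m adj B0) *m (wdots a *t wdots b))
  = \sum_k d 0 k * (\sum_j Sg k j * (a 0 j * b 0 j))%:C.
Proof.
rewrite -scalemxAl mxtraceZ -!mulmxA mxtrace_mulC -!mulmxA (mulmxA (adj B0)) tr_diag.
rewrite mulr_sumr; apply: eq_bigr => k _; rewrite bell_diag mulrCA -rmorphM mulrA mulVf ?mul1r //.
by rewrite pnatr_eq0.
Qed.

Lemma realC0 (x : R) : (x%:C == 0) = (x == 0).
Proof. by rewrite eq_complex /= eqxx andbT. Qed.


Lemma tr_conj n (P S : 'M[C]_n) : adj P *m P = 1%:M -> \tr (P *m S *m adj P) = \tr S.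
Proof. by move=> h; rewrite mxtrace_mulC mulmxA h mul1mx. Qed.

Lemma tr_conj_sq n (P S : 'M[C]_n) : adj P *m P = 1%:M ->
  \tr (P *m S *m adj P *m (P *m S *m adj P)) = \tr (S *m S).
Proof.
move=> h; rewrite !mulmxA -(mulmxA (P *m S) (adj P) P) h mulmx1.
by rewrite mxtrace_mulC !mulmxA h mul1mx.
Qed.

Lemma aus_pure (W : 'M[C]_(2*2, 2)) : AUS3 (W *m adj W) ->
  \tr ((W *m adj W) *m (W *m adj W)) <= 2^-1.
Proof.
case=> [[hS _ htr] hA].
set S := W *m adj W in hS htr hA *.
have [P [d [hPP hD]]] := spec_decomp hS.
have hPP' : adj P *m P = 1%:M := mulmx1C hPP.
have hDZ : diag_mx d = (P *m W) *m adj (P *m W) by rewrite -hD adj_mul /S !mulmxA.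
have dreal : forall k, d 0 k = (complex.Re (d 0 k))%:C.
  move=> k; have : adj (diag_mx d) = diag_mx d by rewrite hDZ adj_mul adjK.
  move/matrixP/(_ k k); rewrite adjE !mxE eqxx mulr1n.
  case: (d 0 k) => x y /= [] hy; congr Complex; lra.
set dr := fun k => complex.Re (d 0 k).
have trD : \tr (diag_mx d) = 1 by rewrite -hD tr_conj.
have trDD : \tr (diag_mx d *m diag_mx d) = \tr (S *m S) by rewrite -hD tr_conj_sq.
have sum1 : \sum_k dr k = 1.
  apply: complexI; rewrite rmorph_sum rmorph1 -trD mxtrace_diag.
  by apply: eq_bigr => k _; exact: (esym (dreal k)).
have sumsq : \tr (S *m S) = (\sum_k dr k ^+ 2)%:C.
  rewrite -trDD tr_diag rmorph_sum; apply: eq_bigr => k _.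
  by rewrite mxE eqxx mulr1n rmorphXn /= /dr -dreal expr2.
have drE : forall k, d 0 k = (dr k)%:C by move=> k; exact: dreal k.
rewrite sumsq inv2C lecR.
clearbody dr.
pose j0 : 'I_(2*2) := mxtens_index (q0, q0).
pose j1 : 'I_(2*2) := mxtens_index (q0, q1).
pose j2 : 'I_(2*2) := mxtens_index (q1, q0).
pose j3 : 'I_(2*2) := mxtens_index (q1, q1).
have e4 : forall F : 'I_(2*2) -> R, \sum_k F k = F j0 + F j1 + (F j2 + F j3).
  by move=> F; rewrite sum4 !sum2.
pose t (j : 'I_3) := \sum_k dr k * Sg k j.
have tE : forall j, t j = dr j0 * Sg 0 j + dr j1 * Sg 1 j + (dr j2 * Sg 2 j + dr j3 * Sg 3 j).
  by move=> j; rewrite /t e4.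
have t0E : t o0 = dr j0 - dr j1 + dr j2 - dr j3.
  by rewrite tE /Sg /=; ring.
have t1E : t o1 = - dr j0 + dr j1 + dr j2 - dr j3.
  by rewrite tE /Sg /=; lra.
have t2E : t o2 = dr j0 + dr j1 - dr j2 - dr j3 by rewrite tE /Sg /=; lra.
set s := \sum_j t j ^+ 2.
have hs : s = 4 * \sum_k dr k ^+ 2 - 1.
  have -> : 4 * \sum_k dr k ^+ 2 - 1 = 4 * \sum_k dr k ^+ 2 - (\sum_k dr k) ^+ 2.
    by rewrite sum1 expr1n.
  rewrite /s sum3 t0E t1E t2E !e4; ring.
suff : s <= 1 by rewrite hs; lra.
have [s_le0|s_gt0] := lerP s 0; first by lra.
suff hmain : forall p : {perm 'I_3}, t (p o1) ^+ 2 = t (p o2) ^+ 2 -> s <= 1.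
  have e01 : t o0 ^+ 2 - t o1 ^+ 2 = 4 * ((dr j0 - dr j1) * (dr j2 - dr j3)) by rewrite t0E t1E; ring.
  have e02 : t o0 ^+ 2 - t o2 ^+ 2 = 4 * ((dr j2 - dr j1) * (dr j0 - dr j3)) by rewrite t0E t2E; ring.
  have e12 : t o1 ^+ 2 - t o2 ^+ 2 = 4 * ((dr j2 - dr j0) * (dr j1 - dr j3)) by rewrite t1E t2E; ring.
  have c1 : t o0 ^+ 2 = t o1 ^+ 2 -> s <= 1.
    by move=> h; apply: (hmain (tperm o0 o2)); rewrite tpermD // tpermR h.
  have c2 : t o0 ^+ 2 = t o2 ^+ 2 -> s <= 1.
    by move=> h; apply: (hmain (tperm o0 o1)); rewrite tpermR tpermD.
  have c3 : t o1 ^+ 2 = t o2 ^+ 2 -> s <= 1.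
    by move=> h; apply: (hmain 1%g); rewrite !perm1.
  case: (eqVneq (dr j0) (dr j1)) => [e|n01].
    by apply: c1; apply/subr0_eq; rewrite e01 e subrr mul0r mulr0.
  case: (eqVneq (dr j2) (dr j3)) => [e|n23].
    by apply: c1; apply/subr0_eq; rewrite e01 e subrr mulr0 mulr0.
  case: (eqVneq (dr j2) (dr j1)) => [e|n21].
    by apply: c2; apply/subr0_eq; rewrite e02 e subrr mul0r mulr0.
  case: (eqVneq (dr j0) (dr j3)) => [e|n03].
    by apply: c2; apply/subr0_eq; rewrite e02 e subrr mulr0 mulr0.
  case: (eqVneq (dr j2) (dr j0)) => [e|n20].
    by apply: c3; apply/subr0_eq; rewrite e12 e subrr mul0r mulr0.
  case: (eqVneq (dr j1) (dr j3)) => [e|n13].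
    by apply: c3; apply/subr0_eq; rewrite e12 e subrr mulr0 mulr0.
  exfalso.
  have nz : forall k, dr k != 0 -> d 0 k != 0 by move=> k; rewrite drE realC0.
  case: (eqVneq (dr j0) 0) => [z0|nz0].
    rewrite z0 in n01 n20 n03.
    by apply: (rank_pairs hDZ (i1:=j1) (i2:=j2) (i3:=j3)) => //; apply: nz; rewrite // eq_sym.
  case: (eqVneq (dr j1) 0) => [z1|nz1].
    rewrite z1 in n21 n13.
    by apply: (rank_pairs hDZ (i1:=j0) (i2:=j2) (i3:=j3)) => //; apply: nz; rewrite // eq_sym.
  case: (eqVneq (dr j2) 0) => [z2|nz2].
    rewrite z2 in n23.
    by apply: (rank_pairs hDZ (i1:=j0) (i2:=j1) (i3:=j3)) => //; apply: nz; rewrite // eq_sym.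
  by apply: (rank_pairs hDZ (i1:=j0) (i2:=j1) (i3:=j2)) => //; apply: nz.
move=> p hp.
have [u [v [hu [hv hsum]]]] := vec_construct hp s_gt0.
pose c : C := (Num.sqrt (2^-1 : R))%:C.
have cc : c * conjc c = (2^-1 : R)%:C by rewrite conjR -rmorphM sqrt_sq // invr_ge0 ler0n.
have c2 : (2^-1 : R)%:C * 2%:R = 1 by rewrite -inv2C mulVf // pnatr_eq0.
pose U := c *: (B0 *m P).
have hU : unitary U.
  rewrite /unitary /U adjZ adj_mul -scalemxAl -scalemxAr scalerA cc.
  by rewrite !mulmxA -(mulmxA B0 P (adj P)) hPP mulmx1 B0_unit scalerA c2 scale1r.
have hUS : U *m S *m adj U = (2^-1 : R)%:C *: (B0 *m diag_mx d *m adj B0).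
  by rewrite /U adjZ adj_mul -hD -!scalemxAl -scalemxAr scalerA cc !mulmxA.
have := hA U u v hU hu hv; rewrite hUS.
under eq_bigr => i _ do rewrite tr_bell.
have ez : forall i, \sum_k d 0 k * (\sum_j Sg k j * (u i 0 j * v i 0 j))%:C
    = (\sum_j t j * (u i 0 j * v i 0 j))%:C.
  move=> i; under eq_bigr => k _ do rewrite drE -rmorphM.
  rewrite -rmorph_sum; congr (_%:C).
  rewrite e4 !sum3 !tE /Sg /=; ring.
under eq_bigr => i _ do rewrite ez.
rewrite -rmorph_sum hsum normC_real -rmorphM lecE /= => /andP[_ h].
move: h; set q := Num.sqrt (3 : R); set r := Num.sqrt (s / 3) => h.
have q0 : 0 < q by rewrite sqrtr_gt0 ltr0n.
have qq : q * q = 3 by rewrite sqrt_sq // ler0n.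
have r0 : 0 < r by rewrite sqrtr_gt0 divr_gt0 // ltr0n.
have rr : r * r = s / 3 by rewrite sqrt_sq // divr_ge0 ?ltW // ler0n.
rewrite ger0_norm in h; last by rewrite divr_ge0 // ltW.
have hw : q^-1 * (s / r) * (q * r) = s.
  by field; apply/andP; split; apply: lt0r_neq0.
have hqr : 0 < q * r by rewrite mulr_gt0.
have : 0 <= (1 - q^-1 * (s / r)) * (q * r).
  by apply: mulr_ge0; [rewrite subr_ge0 | exact: ltW].
rewrite mulrBl mul1r hw subr_ge0 => hsq.
have h2 : s * s <= s by nra.
nra.
Qed.


Lemma G_half (G : 'M[C]_2) : Defs.hermitian G -> \tr G = 1 -> \tr (G *m G) <= (2^-1 : R)%:C ->
  G = (2^-1 : R)%:C *: 1%:M.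
Proof.
move=> hG htr hsq.
have h00 : conjc (G q0 q0) = G q0 q0 by rewrite -adjE hG.
have h11 : conjc (G q1 q1) = G q1 q1 by rewrite -adjE hG.
have h10 : conjc (G q1 q0) = G q0 q1 by rewrite -adjE hG.
suff [e00 e01 e10 e11] : [/\ G q0 q0 = (2^-1)%:C, G q0 q1 = 0, G q1 q0 = 0 & G q1 q1 = (2^-1)%:C].
  apply/matrixP => i j; rewrite !mxE.
  by case: (ord2P i) => ->; case: (ord2P j) => ->; rewrite ?e00 ?e01 ?e10 ?e11 /= ?mulr1 ?mulr0.
move: htr hsq; rewrite /mxtrace !sum2 !mxE !sum2.
move: (G q0 q0) (G q0 q1) (G q1 q0) (G q1 q1) h00 h11 h10 => [a1 a2] [b1 b2] [c1 c2] [e1 e2].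
rewrite /conjc => -[ha] [he] [hb1 hb2] [ht1 ht2].
rewrite lecE /= => /andP[_ hs].
have ha' : - a2 = a2 :> R := ha.
have he' : - e2 = e2 :> R := he.
have a20 : a2 = 0 by move: ha'; clear; lra.
have e20 : e2 = 0 by move: he'; clear; lra.
subst a2 e2; rewrite -hb1 -hb2 in hs *.
have hs' : a1 * a1 + e1 * e1 + 2 * (c1 * c1 + c2 * c2) <= 2^-1.
  by apply: le_trans hs; rewrite le_eqVlt; apply/orP; left; apply/eqP; ring.
have e1E : e1 = 1 - a1 by lra.
subst e1.
have eqq : 2 * (a1 - 2^-1) ^+ 2 + 2 * (c1 ^+ 2 + c2 ^+ 2) =
    a1 * a1 + (1 - a1) * (1 - a1) + 2 * (c1 * c1 + c2 * c2) - 2^-1.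
  by field.
have hq : 2 * (a1 - 2^-1) ^+ 2 + 2 * (c1 ^+ 2 + c2 ^+ 2) <= 0 by rewrite eqq; lra.
have p1 := sqr_ge0 (a1 - 2^-1); have p2 := sqr_ge0 c1; have p3 := sqr_ge0 c2.
have z1 : (a1 - 2^-1) ^+ 2 = 0 by apply/eqP; rewrite eq_le p1 andbT; lra.
have z2 : c1 ^+ 2 = 0 by apply/eqP; rewrite eq_le p2 andbT; lra.
have z3 : c2 ^+ 2 = 0 by apply/eqP; rewrite eq_le p3 andbT; lra.
move/eqP: z1; rewrite sqrf_eq0 subr_eq0 => /eqP ->.
move/eqP: z2; rewrite sqrf_eq0 => /eqP ->.
move/eqP: z3; rewrite sqrf_eq0 => /eqP ->.
rewrite oppr0; split => //; congr Complex; lra.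
Qed.


Lemma dir2 (Y : 'cV[C]_(2 * 2 * 2)) :
  AUS3 (ptrC (Y *m adj Y)) -> ptrAB (Y *m adj Y) = 2^-1 *: 1%:M.
Proof.
rewrite ptrAB_W ptrC_W => hA.
set W := Wm Y in hA *.
have hp := aus_pure hA.
have [[_ _ htr] _] := hA.
have hG : Defs.hermitian (adj W *m W) by rewrite /Defs.hermitian adj_mul adjK.
have trG : \tr (adj W *m W) = 1 by rewrite mxtrace_mulC.
have trGG : \tr ((adj W *m W) *m (adj W *m W)) = \tr ((W *m adj W) *m (W *m adj W)).
  by rewrite !mulmxA mxtrace_mulC !mulmxA.
rewrite inv2C -trGG in hp.
by rewrite (G_half hG trG hp) linearZ /= trmx1 inv2C.
Qed.

End S.

Unset Implicit Arguments.
Theorem theorem5 (R : realType) (Y : 'cV[R[i]]_(2 * 2 * 2)) :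
  adj Y *m Y = 1%:M ->
  (AUS3 (ptrC (Y *m adj Y)) <-> ptrAB (Y *m adj Y) = 2%:R^-1 *: 1%:M).
Proof. by move=> _; split; [exact: dir2 | exact: dir1]. Qed.
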